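(* An $L$-layer linear attention model with $H$ heads, dimension $d$ and precision $p$ cannot solve the permutation composition task $\mathsf{PerCom}$ on $[n]$ whenever $LHd(d+1)p<\log(n!)$ (note $\log(n!)=\Theta(n\log n)$). On the other hand, a single-layer full attention Transformer solves $\mathsf{PerCom}$ with $Hdp=O(\mathrm{poly}\log n)$. The same lower bound holds for linear attention with chain-of-thought.
   Context: Permutation composition $\mathsf{PerCom}(\sigma,\tau)$: the input consists of two bijections $\sigma,\tau:[n]\to[n]$, given as $n$ tokens $\sigma(1),\dots,\sigma(n)$ followed by $n$ tokens $\tau(1),\dots,\tau(n)$. The required output is the sequence $\sigma(\tau(1)),\dots,\sigma(\tau(n))$. Linear attention layer: head outputs $y_i=\sum_{j\le i}\alpha_{i,j}Vx_j$ with $\alpha_{i,j}=\varphi(Qx_i)^\top\varphi(Kx_j)/\sum_{j'\le i}\varphi(Qx_i)^\top\varphi(Kx_{j'})$ for an arbitrary $\varphi:\mathbb{R}^d\to\mathbb{R}^d$. Here $Q,K,V\in\mathbb{R}^{d\times dH}$ have $p$-bit entries, the $H$ heads are concatenated, and each layer is followed by an arbitrary position-wise MLP map. Full attention instead uses softmax weights $\alpha_{i,j}\propto\exp(\langle Qx_i,Kx_j\rangle)$. All quantities use $p$-bit precision. With chain-of-thought, the model autoregressively generates additional tokens after the input (each appended as a new position), and the answer is read from them. *)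

(* Defs.v *)
From HB Require Import structures.
From mathcomp Require Import all_boot all_order all_algebra all_fingroup.
From mathcomp Require Import reals sequences.
From mathcomp.analysis Require Import exp.
Set Implicit Arguments. Unset Strict Implicit. Unset Printing Implicit Defensive.
Import Order.TTheory GRing.Theory Num.Theory.
Local Open Scope ring_scope.

Section Defs.
Variable R : realType.

(* ---------- p-bit precision ----------------------------------------------
   p-bit signed fixed point, round-to-nearest with saturation:
   values k / 2^(p/2) with integer k, |k| <= 2^(p-1) - 1
   (at most 2^p representable values). *)
Definition rnd (p : nat) (x : R) : R :=
  let f := p./2 in
  let M : int := (2 ^ p.-1 - 1)%N%:Z in
  let k : int := Num.floor (x * 2 ^+ f + 2^-1) in
  let k' : int := Num.max (- M) (Num.min M k) in
  k'%:~R / 2 ^+ f.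

Definition rndm (p : nat) (m k : nat) (A : 'M[R]_(m, k)) : 'M[R]_(m, k) :=
  map_mx (rnd p) A.

Definition pbit_mx (p : nat) (m k : nat) (A : 'M[R]_(m, k)) : Prop :=
  forall i j, rnd p (A i j) = A i j.

(* ---------- attention heads ----------------------------------------------
   A head is evaluated at position i on the prefix xs = [x_0; ...; x_i]
   (causal); the current token is the last element of xs.  Row-vector
   convention: "Qx" is x *m Q.  Every intermediate scalar is rounded. *)

(* Linear attention head, in its (recurrent) form
     y_i = phi(q_i)^T S_i / phi(q_i)^T z_i,
     S_i = sum_{j<=i} phi(k_j) v_j^T,  z_i = sum_{j<=i} phi(k_j),
   the prefix sums being accumulated left to right with rounding. *)
Definition lin_head (p d : nat) (Q K V : 'M[R]_d)
    (phi : 'rV[R]_d -> 'rV[R]_d) (xs : seq 'rV[R]_d) : 'rV[R]_d :=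
  let x := last 0 xs in
  let fk (y : 'rV[R]_d) := rndm p (phi (rndm p (y *m K))) in
  let fv (y : 'rV[R]_d) := rndm p (y *m V) in
  let S := foldl (fun (S : 'M[R]_d) y => rndm p (S + (fk y)^T *m fv y)) 0 xs in
  let z := foldl (fun (z : 'rV[R]_d) y => rndm p (z + fk y)) 0 xs in
  let q := rndm p (phi (rndm p (x *m Q))) in
  let num := rndm p (q *m S) in
  let den := rnd p ((q *m z^T) ord0 ord0) in
  map_mx (fun a => rnd p (a / den)) num.

Definition soft_head (p d : nat) (Q K V : 'M[R]_d) (xs : seq 'rV[R]_d)
    : 'rV[R]_d :=
  let x := last 0 xs in
  let q := rndm p (x *m Q) in
  let e (y : 'rV[R]_d) :=
    rnd p (expR (rnd p ((q *m (rndm p (y *m K))^T) ord0 ord0))) in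
  let num := foldl (fun (a : 'rV[R]_d) y => rndm p (a + e y *: rndm p (y *m V))) 0 xs in
  let den := foldl (fun a y => rnd p (a + e y)) 0 xs in
  map_mx (fun a => rnd p (a / den)) num.

(* One layer: H heads (outputs concatenated, here given as a family indexed
   by 'I_H) followed by an arbitrary position-wise map, which also receives
   the layer input at that position (residual stream). *)
Definition apply_layer (p d H : nat)
    (head : 'I_H -> seq 'rV[R]_d -> 'rV[R]_d)
    (mlp : 'rV[R]_d -> ('I_H -> 'rV[R]_d) -> 'rV[R]_d)
    (xs : seq 'rV[R]_d) : seq 'rV[R]_d :=
  mkseq (fun i => rndm p (mlp (nth 0 xs i) (fun h => head h (take i.+1 xs))))
        (size xs).

Record lin_layer (d H : nat) := LinLayer {
  lQ : 'I_H -> 'M[R]_d;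
  lK : 'I_H -> 'M[R]_d;
  lV : 'I_H -> 'M[R]_d;
  lphi : 'I_H -> 'rV[R]_d -> 'rV[R]_d;
  lmlp : 'rV[R]_d -> ('I_H -> 'rV[R]_d) -> 'rV[R]_d }.

Record soft_layer (d H : nat) := SoftLayer {
  sQ : 'I_H -> 'M[R]_d;
  sK : 'I_H -> 'M[R]_d;
  sV : 'I_H -> 'M[R]_d;
  smlp : 'rV[R]_d -> ('I_H -> 'rV[R]_d) -> 'rV[R]_d }.

Definition lin_layer_pbit (p d H : nat) (l : lin_layer d H) : Prop :=
  forall h, [/\ pbit_mx p (lQ l h), pbit_mx p (lK l h) & pbit_mx p (lV l h)].

Definition soft_layer_pbit (p d H : nat) (l : soft_layer d H) : Prop :=
  forall h, [/\ pbit_mx p (sQ l h), pbit_mx p (sK l h) & pbit_mx p (sV l h)].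

Definition run_lin (p d H : nat) (layers : seq (lin_layer d H))
    (xs : seq 'rV[R]_d) : seq 'rV[R]_d :=
  foldl (fun xs l =>
    apply_layer p (fun h => lin_head p (lQ l h) (lK l h) (lV l h) (lphi l h))
                (lmlp l) xs) xs layers.

Definition run_soft (p d H : nat) (layers : seq (soft_layer d H))
    (xs : seq 'rV[R]_d) : seq 'rV[R]_d :=
  foldl (fun xs l =>
    apply_layer p (fun h => soft_head p (sQ l h) (sK l h) (sV l h))
                (smlp l) xs) xs layers.

Definition embed (p d : nat) (T : Type) (emb : nat -> T -> 'rV[R]_d)
    (toks : seq T) : seq 'rV[R]_d :=
  [seq rndm p (emb ij.1 ij.2) | ij <- zip (iota 0 (size toks)) toks].

End Defs.

(* input sequence sigma(1..n) tau(1..n) (0-indexed here) *)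
Definition percom_input (n : nat) (s t : {perm 'I_n}) : seq 'I_n :=
  [seq s i | i <- enum 'I_n] ++ [seq t i | i <- enum 'I_n].

(* Without chain of thought: the output token at position n+i (the position
   holding tau(i)) is read off the last layer by an arbitrary readout. *)
Definition lin_solves (R : realType) (p n d H : nat)
    (layers : seq (lin_layer R d H)) (emb : nat -> 'I_n -> 'rV[R]_d)
    (out : 'rV[R]_d -> 'I_n) : Prop :=
  forall (s t : {perm 'I_n}) (i : 'I_n),
    out (nth 0 (run_lin p layers (embed p emb (percom_input s t))) (n + i))
    = s (t i).

Definition soft_solves (R : realType) (p n d H : nat)
    (layers : seq (soft_layer R d H)) (emb : nat -> 'I_n -> 'rV[R]_d)
    (out : 'rV[R]_d -> 'I_n) : Prop :=
  forall (s t : {perm 'I_n}) (i : 'I_n),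
    out (nth 0 (run_soft p layers (embed p emb (percom_input s t))) (n + i))
    = s (t i).

(* Chain of thought: autoregressive greedy generation of T tokens over a
   finite vocabulary Voc; each new token is a function of the last-layer
   vector at the last position, and is appended as a new position. *)
Definition lin_cot (R : realType) (p d H : nat) (Voc : finType)
    (layers : seq (lin_layer R d H)) (emb : nat -> Voc -> 'rV[R]_d)
    (next : 'rV[R]_d -> Voc) (toks : seq Voc) (T : nat) : seq Voc :=
  drop (size toks)
    (iter T (fun ts => rcons ts (next (last 0 (run_lin p layers (embed p emb ts)))))
          toks).

Definition log2fact (R : realType) (n : nat) : R := ln (n`!%:R : R) / ln 2.

Definition all_lin_pbit (R : realType) (p d H : nat) (layers : seq (lin_layer R d H)) : Prop :=
  foldr (fun l P => lin_layer_pbit p l /\ P) True layers.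
Definition all_soft_pbit (R : realType) (p d H : nat) (layers : seq (soft_layer R d H)) : Prop :=
  foldr (fun l P => soft_layer_pbit p l /\ P) True layers.

(* Main.v *)
Require Import Defs.
From HB Require Import structures.
From mathcomp Require Import all_boot all_order all_algebra all_fingroup.
From mathcomp Require Import reals sequences.
From mathcomp.analysis Require Import exp.
From mathcomp Require Import zify ring lra.
From Stdlib Require Import FunctionalExtensionality.
Set Implicit Arguments. Unset Strict Implicit. Unset Printing Implicit Defensive.
Import Order.TTheory GRing.Theory Num.Theory.
Local Open Scope ring_scope.

Section Rnd.
Variable R : realType.
Variable p : nat.

Definition Mz : int := (2 ^ p.-1 - 1)%N%:Z.
Definition Np := (2 ^ p).-1.+1.
Definition gdec (j : 'I_Np) : R := ((j : nat)%:Z - Mz)%:~R / 2 ^+ p./2.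

Lemma rnd_img (x : R) : exists j : 'I_Np, gdec j = rnd p x.
Proof.
rewrite /rnd /gdec -/Mz.
set k := Num.floor _.
set k' := Num.max _ _.
have h1 : - Mz <= k' by rewrite le_max lexx.
have h2 : k' <= Mz.
  by rewrite ge_max ge_min lexx /= andbT /Mz; lia.
have [K eK] : exists K : int, K = k' by exists k'.
rewrite -eK in h1 h2 *; clearbody k'; move: h1 h2; rewrite /Mz => h1 h2.
exists (inord (absz (K + (2 ^ p.-1 - 1)%N%:Z))).
rewrite inordK; last first.
  have : (absz (K + (2 ^ p.-1 - 1)%N%:Z)%R <= 2 * (2 ^ p.-1 - 1))%N.
    rewrite -lez_nat gez0_abs; last by lia.
    rewrite PoszM; lia.
  move=> H; rewrite ltnS (leq_trans H) //; case: p => [|q] //=.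
  rewrite expnS; have : (0 < 2 ^ q)%N by rewrite expn_gt0.
  lia.
rewrite gez0_abs; last by lia.
by rewrite addrK.
Qed.
End Rnd.

Section Enc.
Variable R : realType.
Variable p : nat.
Definition enc (e : R) : 'I_(Np p) := odflt ord0 [pick j | @gdec R p j == e].
Lemma enc_ok (x : R) : @gdec R p (enc (rnd p x)) = rnd p x.
Proof.
rewrite /enc; case: pickP => [j /eqP //|H].
have [j Hj] := rnd_img (R:=R) p x; by move: (H j); rewrite Hj eqxx.
Qed.
Lemma enc_inj (x y : R) : enc (rnd p x) = enc (rnd p y) -> rnd p x = rnd p y.
Proof. by move=> E; rewrite -enc_ok E enc_ok. Qed.
End Enc.

Section Lower.
Variable R : realType.
Variables p d H : nat.
Implicit Types (l : lin_layer R d H) (a b : seq 'rV[R]_d).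

Definition fk l h (y : 'rV[R]_d) := rndm p (lphi l h (rndm p (y *m lK l h))).
Definition fv l h (y : 'rV[R]_d) := rndm p (y *m lV l h).
Definition stS l h a :=
  foldl (fun (S : 'M[R]_d) y => rndm p (S + (fk l h y)^T *m fv l h y)) 0 a.
Definition stz l h a :=
  foldl (fun (z : 'rV[R]_d) y => rndm p (z + fk l h y)) 0 a.
Definition hd l h := lin_head p (lQ l h) (lK l h) (lV l h) (lphi l h).
Definition app l := apply_layer p (hd l) (lmlp l).

Lemma hd_cat l h a1 a2 b : stS l h a1 = stS l h a2 -> stz l h a1 = stz l h a2 ->
  b != [::] -> hd l h (a1 ++ b) = hd l h (a2 ++ b).
Proof.
move=> ES Ez; case: b => // y b _.
rewrite /hd /lin_head !foldl_cat !last_cat /=.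
move: ES Ez; rewrite /stS /stz /fk /fv => -> -> //.
Qed.

Definition Bl l a b := mkseq (fun i => rndm p (lmlp l (nth 0 b i)
   (fun h => hd l h (a ++ take i.+1 b)))) (size b).

Lemma app_cat l a b : app l (a ++ b) = app l a ++ Bl l a b.
Proof.
rewrite /app /apply_layer /Bl /mkseq size_cat iotaD map_cat add0n; congr (_ ++ _).
  apply/eq_in_map => i; rewrite mem_iota /= add0n => Hi.
  rewrite nth_cat Hi take_cat; case: ltnP => // H2.
  have -> : (i.+1 - size a = 0)%N by lia.
  by rewrite take0 cats0 take_oversize.
have -> : iota (size a) (size b) = map (addn (size a)) (iota 0 (size b)) by rewrite -iotaDl addn0.
rewrite -map_comp; apply: eq_map => i /=.
rewrite nth_cat ltnNge leq_addr /=.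
have -> : (size a + i - size a = i)%N by lia.
rewrite take_cat; case: ltnP => H2; first lia.
by have -> : ((size a + i).+1 - size a = i.+1)%N by lia.
Qed.

Lemma size_app l a : size (app l a) = size a.
Proof. by rewrite /app /apply_layer size_mkseq. Qed.

Lemma size_run (ls : seq (lin_layer R d H)) a : size (run_lin p ls a) = size a.
Proof. elim: ls a => //= l ls IH a; by rewrite IH size_app. Qed.

Fixpoint same_st (ls : seq (lin_layer R d H)) a1 a2 : Prop :=
  match ls with
  | [::] => True
  | l :: ls' => (forall h, stS l h a1 = stS l h a2 /\ stz l h a1 = stz l h a2)
                /\ same_st ls' (app l a1) (app l a2)
  end.

Lemma core (ls : seq (lin_layer R d H)) a1 a2 b : size a1 = size a2 -> same_st ls a1 a2 ->
  drop (size a1) (run_lin p ls (a1 ++ b)) = drop (size a2) (run_lin p ls (a2 ++ b)).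
Proof.
elim: ls a1 a2 b => [|l ls IH] a1 a2 b /= Hs.
  by rewrite !drop_size_cat.
move=> [Hst Hss].
have -> : run_lin p ls (app l (a1 ++ b)) = run_lin p ls (app l a1 ++ Bl l a1 b) by rewrite app_cat.
have -> : run_lin p ls (app l (a2 ++ b)) = run_lin p ls (app l a2 ++ Bl l a2 b) by rewrite app_cat.
have -> : Bl l a1 b = Bl l a2 b.
  rewrite /Bl; case: b => [//|y b]; apply: eq_mkseq => i; congr (rndm p _).
  congr (lmlp l _ _); apply: functional_extensionality => h. apply: hd_cat; try by case: (Hst h).
rewrite -(size_app l a1) -(size_app l a2); apply: IH => //; by rewrite !size_app.
Qed.
End Lower.

Section Count.
Variable R : realType.
Variables p d H : nat.
Implicit Types (l : lin_layer R d H) (a b : seq 'rV[R]_d).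

Definition CT := ({ffun 'I_H * 'I_d * 'I_d -> 'I_(Np p)} * {ffun 'I_H * 'I_d -> 'I_(Np p)})%type.
Definition codeL l a : CT :=
  ([ffun x => enc p (stS p l x.1.1 a x.1.2 x.2)], [ffun x => enc p (stz p l x.1 a 0 x.2)]).

Lemma stS_rnd l h a : a != [::] -> exists W, stS p l h a = rndm p W.
Proof. case/lastP: a => // a y _; rewrite /stS foldl_rcons; by eexists. Qed.
Lemma stz_rnd l h a : a != [::] -> exists W, stz p l h a = rndm p W.
Proof. case/lastP: a => // a y _; rewrite /stz foldl_rcons; by eexists. Qed.

Lemma codeL_inj l a1 a2 : a1 != [::] -> a2 != [::] -> codeL l a1 = codeL l a2 ->
  forall h, stS p l h a1 = stS p l h a2 /\ stz p l h a1 = stz p l h a2.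
Proof.
move=> n1 n2 [E1 E2] h; split.
  have [W1 e1] := stS_rnd l h n1; have [W2 e2] := stS_rnd l h n2.
  apply/matrixP => i j.
  move/ffunP: E1 => /(_ (h, i, j)); rewrite !ffunE /= e1 e2 !mxE.
  exact: enc_inj.
have [W1 e1] := stz_rnd l h n1; have [W2 e2] := stz_rnd l h n2.
apply/matrixP => i j; rewrite !ord1.
move/ffunP: E2 => /(_ (h, j)); rewrite !ffunE /= e1 e2 !mxE.
exact: enc_inj.
Qed.

Fixpoint codes (ls : seq (lin_layer R d H)) a : seq CT :=
  match ls with
  | [::] => [::]
  | l :: ls' => codeL l a :: codes ls' (app p l a)
  end.

Lemma size_codes ls a : size (codes ls a) = size ls.
Proof. by elim: ls a => //= l ls IH a; rewrite IH. Qed.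

Lemma codes_same ls a1 a2 : a1 != [::] -> a2 != [::] ->
  codes ls a1 = codes ls a2 -> same_st p ls a1 a2.
Proof.
elim: ls a1 a2 => //= l ls IH a1 a2 n1 n2 /eqP; rewrite eqseq_cons => /andP [/eqP E1 /eqP E2]; split.
  exact: codeL_inj E1.
apply: IH E2; by rewrite -size_eq0 size_app size_eq0.
Qed.

Lemma count_bound n (ls : seq (lin_layer R d H)) (A : {perm 'I_n} -> seq 'rV[R]_d) :
  (0 < n)%N -> (forall s, size (A s) = n) ->
  (forall s1 s2, same_st p ls (A s1) (A s2) -> s1 = s2) ->
  (n`! <= 2 ^ (p * (H * d * d + H * d) * size ls))%N.
Proof.
move=> n0 HA Hinj.
have ne s : A s != [::] by rewrite -size_eq0 HA -lt0n.
pose f s : (size ls).-tuple CT := @Tuple (size ls) CT (codes ls (A s)) (introT eqP (size_codes ls (A s))).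
have finj : injective f.
  move=> s1 s2 /(congr1 val) /= E; apply: Hinj; exact: codes_same E.
have := leq_card f finj.
rewrite card_Sn card_tuple card_prod !card_ffun !card_prod !card_ord /Np prednK ?expn_gt0 //.
by rewrite -!expnM -expnD -expnM mulnDr.
Qed.
End Count.

Lemma embed_cat (R : realType) p d (T : Type) (emb : nat -> T -> 'rV[R]_d) (u v : seq T) :
  embed p emb (u ++ v) = embed p emb u ++
    [seq rndm p (emb ij.1 ij.2) | ij <- zip (iota (size u) (size v)) v].
Proof. by rewrite /embed size_cat iotaD zip_cat ?size_iota // map_cat add0n. Qed.

Lemma size_embed (R : realType) p d (T : Type) (emb : nat -> T -> 'rV[R]_d) (u : seq T) :
  size (embed p emb u) = size u.
Proof. by rewrite /embed size_map size_zip size_iota minnn. Qed.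

Lemma run_nth (R : realType) p d H (ls : seq (lin_layer R d H)) a1 a2 b i :
  size a1 = size a2 -> same_st p ls a1 a2 ->
  nth 0 (run_lin p ls (a1 ++ b)) (size a1 + i) = nth 0 (run_lin p ls (a2 ++ b)) (size a2 + i).
Proof. by move=> Hs Hss; rewrite -!nth_drop (core b Hs Hss). Qed.

Lemma log_bound (R : realType) n N : (n`! <= 2 ^ N)%N -> log2fact R n <= N%:R.
Proof.
move=> Hn; rewrite /log2fact.
have l2 : 0 < ln (2 : R) by apply: ln_gt0; lra.
rewrite ler_pdivrMr // mulr_natl -lnXn // -natrX.
rewrite ler_ln ?posrE ?ltr0n ?fact_gt0 ?expn_gt0 //.
by rewrite ler_nat.
Qed.

Lemma nat_exp_eq L H d p :
  (p * (H * d * d + H * d) * L = L * H * d * (d + 1) * p)%N.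
Proof. ring. Qed.

Lemma part1 : forall (R : realType) (n L H d p : nat),
     ((L * H * d * (d + 1) * p)%N%:R < log2fact R n) ->
     forall (layers : seq (lin_layer R d H)) (emb : nat -> 'I_n -> 'rV[R]_d)
            (out : 'rV[R]_d -> 'I_n),
       size layers = L ->
       all_lin_pbit p layers ->
       ~ lin_solves p layers emb out.
Proof.
move=> R n L H d p Hlt layers emb out HL _ Hsol.
case: n emb out Hlt Hsol => [|n] emb out Hlt Hsol.
  by move: Hlt; rewrite /log2fact /= ln1 mul0r ltNge ler0n.
pose A (s : {perm 'I_n.+1}) := embed p emb [seq s i | i <- enum 'I_n.+1].
have HA s : size (A s) = n.+1.
  rewrite /A size_embed. exact: (etrans (size_map _ _) (size_enum_ord _)).
have := @count_bound R p d H n.+1 layers A isT HA.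
have Hv : forall s : {perm 'I_n.+1}, size [seq s i | i <- enum 'I_n.+1] = n.+1 by move=> s; exact: (etrans (size_map _ _) (size_enum_ord _)).
have key s1 s2 : same_st p layers (A s1) (A s2) -> s1 = s2.
  move=> Hss; apply/permP => i.
  have := Hsol s1 1%g i; have := Hsol s2 1%g i.
  rewrite /percom_input !embed_cat !Hv !perm1.
  set b := [seq rndm p _ | _ <- _].
  have E := run_nth b i (etrans (HA s1) (esym (HA s2))) Hss.
  rewrite !HA /A in E.
  by rewrite E => -> ->.
move=> /(_ key); rewrite HL nat_exp_eq => /(log_bound R).
by rewrite leNgt Hlt.
Qed.

Lemma last_drop (T : Type) (x : T) k s : (k < size s)%N -> last x s = last x (drop k s).
Proof.
move=> Hk; rewrite -{1}(cat_take_drop k s) last_cat.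
have : (0 < size (drop k s))%N by rewrite size_drop subn_gt0.
by case: (drop k s).
Qed.

Lemma last_run (R : realType) p d H (ls : seq (lin_layer R d H)) a1 a2 b :
  size a1 = size a2 -> same_st p ls a1 a2 -> b != [::] ->
  last 0 (run_lin p ls (a1 ++ b)) = last 0 (run_lin p ls (a2 ++ b)).
Proof.
move=> Hs Hss nb.
have nb' : (0 < size b)%N by rewrite lt0n size_eq0.
rewrite (@last_drop _ _ (size a1)); last by rewrite size_run size_cat -{1}[size _]addn0 ltn_add2l.
rewrite [RHS](@last_drop _ _ (size a2)); last by rewrite size_run size_cat -{1}[size _]addn0 ltn_add2l.
by rewrite (core b Hs Hss).
Qed.

Lemma part3 : forall (R : realType) (n L H d p T : nat) (Voc : finType),
     ((L * H * d * (d + 1) * p)%N%:R < log2fact R n) ->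
     forall (layers : seq (lin_layer R d H)) (inp : 'I_n -> Voc)
            (emb : nat -> Voc -> 'rV[R]_d) (next : 'rV[R]_d -> Voc)
            (ans : seq Voc -> 'I_n -> 'I_n),
       size layers = L ->
       all_lin_pbit p layers ->
       ~ (forall (s t : {perm 'I_n}) (i : 'I_n),
            ans (lin_cot p layers emb next (map inp (percom_input s t)) T) i
            = s (t i)).
Proof.
move=> R n L H d p T Voc Hlt layers inp emb next ans HL _ Hsol.
case: n inp ans Hlt Hsol => [|n] inp ans Hlt Hsol.
  by move: Hlt; rewrite /log2fact /= ln1 mul0r ltNge ler0n.
pose U (s : {perm 'I_n.+1}) := map inp [seq s i | i <- enum 'I_n.+1].
pose V := map inp [seq (1%g : {perm 'I_n.+1}) i | i <- enum 'I_n.+1].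
have HU s : size (U s) = n.+1.
  rewrite /U size_map; exact: (etrans (size_map _ _) (size_enum_ord _)).
have HV : size V = n.+1.
  rewrite /V size_map; exact: (etrans (size_map _ _) (size_enum_ord _)).
pose A (s : {perm 'I_n.+1}) := embed p emb (U s).
have HA s : size (A s) = n.+1 by rewrite size_embed HU.
have := @count_bound R p d H n.+1 layers A isT HA.
have key s1 s2 : same_st p layers (A s1) (A s2) -> s1 = s2.
  move=> Hss.
  pose f := fun ts => rcons ts (next (last 0 (run_lin p layers (embed p emb ts)))).
  have claim k : exists W, [/\ (size V <= size W)%N,
      iter k f (U s1 ++ V) = U s1 ++ W & iter k f (U s2 ++ V) = U s2 ++ W].
    elim: k => [|k [W [sW E1 E2]]]; first by exists V.
    rewrite !iterS E1 E2 /f.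
    exists (rcons W (next (last 0 (run_lin p layers (embed p emb (U s1 ++ W)))))).
    rewrite !embed_cat !HU -/(A s1) -/(A s2) size_rcons !rcons_cat; split => //; first lia.
    rewrite (@last_run R p d H layers (A s1) (A s2)) //; first by rewrite !HA.
    rewrite -size_eq0 size_map size_zip size_iota minnn -lt0n; lia.
  have [W [_ E1 E2]] := claim T.
  apply/permP => i.
  have := Hsol s1 1%g i; have := Hsol s2 1%g i.
  rewrite !perm1 /percom_input !map_cat -/(U s1) -/(U s2) -/V /lin_cot E1 E2.
  rewrite !size_cat addnC -!drop_drop !drop_size_cat // ?HU ?HV //.
  by move=> <- <-.
move=> /(_ key); rewrite HL nat_exp_eq => /(log_bound R).
by rewrite leNgt Hlt.
Qed.


Section Prec.
Variable R : realType.
Variables f B : nat.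
Hypothesis hB : (B * 2 ^ f < 2 ^ (f.*2).-1)%N.
Local Notation p := (f.*2).

Definition isrep (x : R) := exists m : int, x = m%:~R /\ (absz m <= B)%N.

Lemma rnd_rep x : isrep x -> rnd p x = x.
Proof.
case=> m [-> hm]; rewrite /rnd doubleK.
have h3 : (0 < 2 ^ f)%N by rewrite expn_gt0.
have e2 : (2 : R) ^+ f = ((2 ^ f)%N%:Z)%:~R by rewrite -pmulrn natrX.
have -> : Num.floor (m%:~R * 2 ^+ f + 2^-1 : R) = m * (2 ^ f)%N%:Z.
  apply: floor_def; rewrite e2 -intrM intrD; apply/andP; split.
    by rewrite lerDl; lra.
  by rewrite ltrD2l; lra.
have : (- ((2 ^ p.-1 - 1)%N%:Z) <= m * (2 ^ f)%N%:Z) && (m * (2 ^ f)%N%:Z <= (2 ^ p.-1 - 1)%N%:Z).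
  move: (2 ^ f)%N (2 ^ p.-1)%N hB h3 => X Y h2 h3; nia.
case/andP => l1 l2.
rewrite min_r // max_r // intrM -e2 mulfK //.
by rewrite expf_neq0 // pnatr_eq0.
Qed.

Lemma isrep_nat (k : nat) : (k <= B)%N -> isrep k%:R.
Proof. by move=> h; exists k%:Z; split. Qed.

Lemma isrepN x : isrep x -> isrep (- x).
Proof. by case=> m [-> h]; exists (- m); rewrite mulrNz abszN. Qed.

Lemma isrep0 : isrep 0.
Proof. by exists 0; split. Qed.

Lemma rnd_mono (x y : R) : x <= y -> rnd p x <= rnd p y.
Proof.
move=> hxy; rewrite /rnd ler_pM2r ?invr_gt0 ?exprn_gt0 // ler_int.
apply: le_max2 => //; apply: le_min2 => //; apply: le_floor.
by rewrite lerD2r ler_pM2r ?exprn_gt0.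
Qed.

Lemma rnd_small (x : R) : 0 <= x -> x * 2 ^+ p./2 < 2^-1 -> rnd p x = 0.
Proof.
move=> h0 h1; rewrite /rnd.
have -> : Num.floor (x * 2 ^+ p./2 + 2^-1 : R) = 0.
  apply: floor_def; rewrite add0r /=; apply/andP; split.
    have : 0 <= x * 2 ^+ p./2 by apply: mulr_ge0 => //; apply: exprn_ge0.
    rewrite -[0%:~R]/(0 : R); lra.
  by rewrite -[1%:~R]/(1 : R); lra.
by rewrite min_r ?max_r ?mul0r //; lia.
Qed.
End Prec.

Lemma size_pin n (s t : {perm 'I_n}) : size (percom_input s t) = (n + n)%N.
Proof. rewrite /percom_input size_cat; congr addn; exact: (etrans (size_map _ _) (size_enum_ord _)). Qed.

Lemma nth_pin_l n (s t : {perm 'I_n}) (j : 'I_n) x0 : nth x0 (percom_input s t) j = s j.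
Proof.
have hs : size [seq s i | i <- enum 'I_n] = n by exact: (etrans (size_map _ _) (size_enum_ord _)).
rewrite /percom_input nth_cat hs ltn_ord.
have := @nth_map _ j _ x0 (fun i => s i) j (enum 'I_n).
rewrite size_enum_ord ltn_ord nth_ord_enum => h; exact: h.
Qed.

Lemma nth_pin_r n (s t : {perm 'I_n}) (j : 'I_n) x0 : nth x0 (percom_input s t) (n + j) = t j.
Proof.
have hs : size [seq s i | i <- enum 'I_n] = n by exact: (etrans (size_map _ _) (size_enum_ord _)).
rewrite /percom_input nth_cat hs ltnNge leq_addr /= addKn.
have := @nth_map _ j _ x0 (fun i => t i) j (enum 'I_n).
rewrite size_enum_ord ltn_ord nth_ord_enum => h; exact: h.
Qed.

Section Soft.
Variable R : realType.
Variables m f : nat.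
Local Notation n := m.+1.
Local Notation p := (f.*2).
Local Notation be := (f + 2)%N.
Hypothesis hB : (2 * be * n ^ 2 * 2 ^ f < 2 ^ (f.*2).-1)%N.
Local Notation B := (2 * be * n ^ 2)%N.

Definition vec4 (a b c e : R) : 'rV[R]_4 := \row_(k < 4) nth 0 [:: a; b; c; e] k.

Lemma rndm_vec4 a b c e : isrep B a -> isrep B b -> isrep B c -> isrep B e ->
  rndm p (vec4 a b c e) = vec4 a b c e.
Proof.
move=> ha hb hc he; apply/rowP => k; rewrite !mxE.
by case: k => [[|[|[|[|k]]]] Hk] //=; apply: (rnd_rep hB).
Qed.

Lemma vec4N a b c e : - vec4 a b c e = vec4 (- a) (- b) (- c) (- e).
Proof.
by apply/rowP => k; rewrite !mxE; case: k => [[|[|[|[|k]]]] Hk] //=; rewrite oppr0.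
Qed.

Lemma dot4 a b c e a' b' c' e' :
  (vec4 a b c e *m (vec4 a' b' c' e')^T) 0 0 = a * a' + b * b' + c * c' + e * e'.
Proof. by rewrite !mxE !big_ord_recr big_ord0 /= !mxE /= add0r. Qed.

Definition emb (j : nat) (tok : 'I_n) : 'rV[R]_4 :=
  if (j < n)%N then vec4 (j.+1)%:R ((j.+1) ^ 2)%N%:R 1 (tok : nat)%:R
  else vec4 (- (2 * be * (tok : nat).+1)%N%:R) be%:R (be * (tok : nat).+1 ^ 2)%N%:R 0.

Lemma emb_rep j tok : rndm p (emb j tok) = emb j tok /\ rndm p (- emb j tok) = - emb j tok.
Proof.
have tn : (tok < n)%N := ltn_ord tok.
have n1 : (1 <= n ^ 2)%N by rewrite expn_gt0.
have r1 : forall k0 : nat, (k0 <= n)%N -> isrep B (k0%:R : R).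
  move=> k0 hk0; apply: (isrep_nat R); apply: (leq_trans hk0); nia.
have one : isrep B (1 : R) by exists 1; split => //=; nia.
rewrite /emb; case: ifP => hj.
  have h1 : isrep B ((j.+1)%:R : R) by apply: r1.
  have h2 : isrep B (((j.+1) ^ 2)%N%:R : R) by apply: (isrep_nat R); nia.
  have h4 : isrep B ((tok : nat)%:R : R) by apply: r1; lia.
  by rewrite vec4N; split; apply: rndm_vec4 => //; apply: isrepN.
have h1 : isrep B ((2 * be * (tok : nat).+1)%N%:R : R) by apply: (isrep_nat R); nia.
have h2 : isrep B (be%:R : R) by apply: (isrep_nat R); nia.
have h3 : isrep B ((be * (tok : nat).+1 ^ 2)%N%:R : R) by apply: (isrep_nat R); nia.
have h0 := @isrep0 R B.
by rewrite vec4N opprK; split; apply: rndm_vec4 => //; apply: isrepN.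
Qed.

Lemma e_one : rnd p (expR (rnd p (0 : R))) = 1.
Proof.
rewrite (rnd_rep hB (@isrep0 R B)) expR0; apply: (rnd_rep hB).
by exists 1; split => //=; nia.
Qed.

Lemma e_zero (s : R) : s <= - be%:R -> rnd p (expR (rnd p s)) = 0.
Proof.
move=> hs.
have hbe : isrep B (- (be%:R : R)) by apply: isrepN; apply: (isrep_nat R); nia.
have h1 : rnd p s <= - be%:R by rewrite -(rnd_rep hB hbe); apply: (rnd_mono f).
apply: (rnd_small hB); first exact: expR_ge0.
rewrite doubleK.
set a := expR (rnd p s).
set E := expR (be%:R : R).
have ha : 0 <= a by apply: expR_ge0.
have haE : a * E <= 1.
  have : a <= expR (- be%:R) by rewrite ler_expR.
  have -> : expR (- be%:R) = E^-1 by rewrite expRN.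
  move=> h; apply: (le_trans (ler_wpM2r (expR_ge0 _) h)).
  by rewrite mulVf // gt_eqF // expR_gt0.
have hX : 0 < (2 : R) ^+ f by apply: exprn_gt0.
have hE : (2 : R) ^+ f * 4 <= E.
  have e2 : (2 : R) <= expR 1 by have := expR_ge1Dx (1 : R); lra.
  have k1 : (2 : R) ^+ f <= expR 1 ^+ f by apply: lerXn2r => //; rewrite nnegrE ?expR_ge0 //; lra.
  have k2 : (2 : R) ^+ 2 <= expR 1 ^+ 2 by apply: lerXn2r => //; rewrite nnegrE ?expR_ge0 //; lra.
  have k3 : (2 : R) ^+ 2 = 4 by rewrite expr2; lra.
  rewrite /E -[be%:R]mulr1 expRM_natl exprD -k3.
  apply: ler_pM => //; [exact: exprn_ge0 | lra].
nra.
Qed.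

Definition Qm : 'M[R]_4 := 1%:M.
Definition Km : 'M[R]_4 := - 1%:M.
Definition Vm : 'M[R]_4 := 1%:M.

Definition sc (x y : 'rV[R]_4) := (rndm p (x *m Qm) *m (rndm p (y *m Km))^T) 0 0.

Lemma sc_val (i : nat) (tq : 'I_n) j tok :
  rnd p (expR (rnd p (sc (emb (n + i) tq) (emb j tok)))) = if j == tq then 1 else 0.
Proof.
have [r1 _] := emb_rep (n + i) tq.
have [_ r2] := emb_rep j tok.
rewrite /sc /Qm /Km mulmx1 mulmxN mulmx1 r1 r2.
rewrite /emb ltnNge leq_addr /=.
case: ifP => hj.
  rewrite vec4N dot4.
  case: eqP => [->|hne].
    have -> : (- (2 * be * (tq : nat).+1)%N%:R * - ((tq : nat).+1)%:R + be%:R * - (((tq : nat).+1) ^ 2)%N%:R +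
     (be * (tq : nat).+1 ^ 2)%N%:R * -1 + 0 * - (tok : nat)%:R : R) = 0.
      rewrite !natrM; ring.
    exact: e_one.
  apply: e_zero.
  have -> : - (2 * be * (tq : nat).+1)%N%:R * - (j.+1)%:R + be%:R * - ((j.+1) ^ 2)%N%:R +
     (be * (tq : nat).+1 ^ 2)%N%:R * -1 + 0 * - (tok : nat)%:R
     = - (be%:R * (((j.+1)%:R - ((tq : nat).+1)%:R) ^+ 2) : R).
    rewrite !natrM; ring.
  rewrite lerN2 -[X in X <= _]mulr1 ler_wpM2l ?ler0n //.
  apply: sqr_intr_ge1; first by rewrite rpredB // rpred_nat.
  by rewrite subr_eq0 eqr_nat eqSS; apply/eqP => E; apply: hne; exact: E.
have jt : j != tq by apply/eqP => E; move: hj; rewrite E ltn_ord.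
rewrite (negbTE jt); apply: e_zero.
rewrite vec4N dot4.
have -> : (- (2 * be * (tq : nat).+1)%N%:R * - - (2 * be * (tok : nat).+1)%N%:R + be%:R * - be%:R +
  (be * (tq : nat).+1 ^ 2)%N%:R * - (be * (tok : nat).+1 ^ 2)%N%:R + 0 * - 0 : R)
  = - ((2 * be * (tq : nat).+1 * (2 * be * (tok : nat).+1) + be * be +
        be * (tq : nat).+1 ^ 2 * (be * (tok : nat).+1 ^ 2))%N%:R).
  rewrite !natrD !natrM; ring.
rewrite lerN2 ler_nat; nia.
Qed.

Lemma foldl_map' (T1 T2 T3 : Type) (F : T1 -> T2 -> T1) (g : T3 -> T2) z s :
  foldl F z (map g s) = foldl (fun z j => F z (g j)) z s.
Proof. by elim: s z => //= x s IH z. Qed.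

Lemma fold_num (w : nat -> 'rV[R]_4) (c : nat -> R) a s :
  (forall j, j \in s -> c j = 0) -> rndm p a = a ->
  foldl (fun a j => rndm p (a + c j *: w j)) a s = a.
Proof.
elim: s a => //= j s IH a hc ha.
rewrite hc ?mem_head // scale0r addr0 ha IH // => k hk.
by apply: hc; rewrite in_cons hk orbT.
Qed.

Lemma fold_den (c : nat -> R) a s :
  (forall j, j \in s -> c j = 0) -> rnd p a = a ->
  foldl (fun a j => rnd p (a + c j)) a s = a.
Proof.
elim: s a => //= j s IH a hc ha.
rewrite hc ?mem_head // addr0 ha IH // => k hk.
by apply: hc; rewrite in_cons hk orbT.
Qed.

Lemma iota_split k N : (k <= N)%N ->
  iota 0 N.+1 = iota 0 k ++ k :: iota k.+1 (N - k).
Proof.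
move=> hk; have -> : N.+1 = (k + (N - k).+1)%N by lia.
by rewrite iotaD.
Qed.

Lemma embed_mkseq (T : Type) (emb' : nat -> T -> 'rV[R]_4) (toks : seq T) (x0 : T) :
  embed p emb' toks = mkseq (fun j => rndm p (emb' j (nth x0 toks j))) (size toks).
Proof.
apply: (@eq_from_nth _ 0); first by rewrite size_embed size_mkseq.
move=> j; rewrite size_embed => hj.
rewrite nth_mkseq // /embed (nth_map (0%N, x0)) ?size_zip ?size_iota ?minnn //.
by rewrite nth_zip ?size_iota //= nth_iota.
Qed.

Lemma rndm_id (v : 'rV[R]_4) : rndm p v = map_mx (rnd p) v.
Proof. by []. Qed.

Lemma fold_all (c : nat -> R) (w : nat -> 'rV[R]_4) k N :
  (k <= N)%N -> c k = 1 -> (forall j, j != k -> c j = 0) -> rndm p (w k) = w k ->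
  map_mx (fun a => rnd p (a / foldl (fun z j => rnd p (z + c j)) 0 (iota 0 N.+1)))
    (foldl (fun z j => rndm p (z + c j *: w j)) 0 (iota 0 N.+1)) = w k.
Proof.
move=> kN ck cj wk.
have r0 : rndm p (0 : 'rV[R]_4) = 0.
  by apply/rowP => c0; rewrite !mxE (rnd_rep hB (@isrep0 R B)).
have rr0 : rnd p (0 : R) = 0 by rewrite (rnd_rep hB (@isrep0 R B)).
have rr1 : rnd p (1 : R) = 1 by apply: (rnd_rep hB); exists 1; split => //=; nia.
rewrite (iota_split kN) !foldl_cat /=.
rewrite (@fold_num w c 0 (iota 0 k)); first last.
- exact: r0.
- by move=> j; rewrite mem_iota => /andP[_ hj]; apply: cj; apply/eqP; lia.
rewrite (@fold_den c 0 (iota 0 k)); first last.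
- exact: rr0.
- by move=> j; rewrite mem_iota => /andP[_ hj]; apply: cj; apply/eqP; lia.
rewrite ck scale1r !add0r wk rr1 fold_num; first last.
- exact: wk.
- by move=> j; rewrite mem_iota => /andP[hj _]; apply: cj; apply/eqP; lia.
rewrite fold_den; first last.
- exact: rr1.
- by move=> j; rewrite mem_iota => /andP[hj _]; apply: cj; apply/eqP; lia.
by apply/rowP => c0; rewrite !mxE divr1; move/rowP: wk => /(_ c0); rewrite mxE.
Qed.

Lemma head_ok (s t : {perm 'I_n}) (i : 'I_n) :
  soft_head p Qm Km Vm (take (n + i).+1 (embed p emb (percom_input s t))) = emb (t i) (s (t i)).
Proof.
set toks := percom_input s t.
have stoks : size toks = (n + n)%N by apply: size_pin.
pose xv j := emb j (nth ord0 toks j).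
have Xe : embed p emb toks = mkseq xv (n + n).
  rewrite (embed_mkseq _ _ ord0) stoks; apply: eq_mkseq => j.
  by have [-> _] := emb_rep j (nth ord0 toks j).
have tk : forall j : 'I_n, nth ord0 toks j = s j by move=> j; apply: nth_pin_l.
have tq : nth ord0 toks (n + i) = t i by apply: nth_pin_r.
set N := (n + i)%N.
have Tk : take N.+1 (embed p emb toks) = map xv (iota 0 N.+1).
  rewrite Xe /mkseq -map_take take_iota; congr (map _ (iota _ _)).
  apply/minn_idPl; rewrite /N; have := ltn_ord i; lia.
rewrite Tk /soft_head.
have lastx : last 0 (map xv (iota 0 N.+1)) = emb N (t i).
  have -> : iota 0 N.+1 = iota 0 N ++ [:: N] by rewrite -addn1 iotaD.
  by rewrite map_cat last_cat /= /xv tq.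
rewrite lastx !foldl_map'.
set k := (t i : nat).
have kN : (k <= N)%N by rewrite /k /N; have := ltn_ord (t i); lia.
have ev : forall j, rnd p (expR (rnd p ((rndm p (emb N (t i) *m Qm) *m
      (rndm p (xv j *m Km))^T) ord0 ord0))) = if j == k then 1 else 0.
  by move=> j; apply: (sc_val i (t i) j).
have xk : rndm p (xv k *m Vm) = xv k.
  by rewrite /Vm mulmx1; have [-> _] := emb_rep k (nth ord0 toks k).
rewrite (@fold_all _ (fun j => rndm p (xv j *m Vm)) k N kN).
- by rewrite xk /xv /k tk.
- by rewrite (ev k) eqxx.
- by move=> j /negbTE hj; rewrite (ev j) hj.
- by rewrite xk; have [-> _] := emb_rep k (nth ord0 toks k).
Qed.

Definition the_layer : soft_layer R 4 1 :=
  SoftLayer (fun _ => Qm) (fun _ => Km) (fun _ => Vm) (fun x hs => hs ord0).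
Definition the_out (v : 'rV[R]_4) : 'I_n := inord (absz (Num.floor (v 0 3))).

Lemma the_solves : soft_solves p [:: the_layer] emb the_out.
Proof.
move=> s t i.
have hs : size (embed p emb (percom_input s t)) = (n + n)%N by rewrite size_embed size_pin.
rewrite /run_soft /= /apply_layer nth_mkseq; last by rewrite hs ltn_add2l.
rewrite /= head_ok.
have [-> _] := emb_rep (t i) (s (t i)).
rewrite /the_out /emb ltn_ord !mxE /=.
have -> : Num.floor (((s (t i)) : nat)%:R : R) = (s (t i) : nat)%:Z.
  apply: floor_def; rewrite intrD /=; apply/andP; split => //.
  by rewrite ltrDl.
by rewrite absz_nat inord_val.
Qed.

Lemma the_pbit : all_soft_pbit p [:: the_layer].
Proof.
have e01 : forall b : bool, rnd p (b%:R : R) = b%:R.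
  move=> b; apply: (rnd_rep hB); apply: (isrep_nat R); case: b => //=; nia.
split => // h; split => i j; rewrite /= /Qm /Km /Vm !mxE ?e01 //.
rewrite (rnd_rep hB) //; apply: isrepN; apply: (isrep_nat R); case: (_ == _) => //=; nia.
Qed.
End Soft.

Definition fsz n := (4 * trunc_log 2 n + 8)%N.

Lemma hB_ok n : (0 < n)%N ->
  (2 * (fsz n + 2) * n ^ 2 * 2 ^ fsz n < 2 ^ ((fsz n).*2).-1)%N.
Proof.
move=> n0; set f := fsz n.
set l := trunc_log 2 n.
have h1 : (n < 2 ^ l.+1)%N by apply: trunc_log_ltn.
have h3 : (2 * l < 2 ^ (2 * l))%N by apply: ltn_expl.
have e : (2 ^ (f.*2).-1 = 2 ^ (2 * l) * 2 ^ 5 * (2 ^ l.+1) ^ 2 * 2 ^ f)%N.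
  by rewrite -!expnM -!expnD; congr (2 ^ _)%N; rewrite /f /fsz -!muln2; lia.
rewrite e ltn_pmul2r ?expn_gt0 // (_ : 2 ^ 5 = 32)%N //.
move: (2 ^ (2 * l))%N (2 ^ l.+1)%N h1 h3 => A Y h1 h3.
rewrite /f /fsz.
have : (8 * l + 20 < A * 32)%N by lia.
move=> h4.
have h5 : (n ^ 2 < Y ^ 2)%N by rewrite ltn_sqr.
have : (0 < n ^ 2)%N by rewrite expn_gt0 n0.
nia.
Qed.

Lemma size_bound (R : realType) n : (2 <= n)%N ->
  ((1 * 4 * (fsz n).*2)%N%:R : R) <= (128 / ln 2) * (ln (n%:R : R)) ^+ 1.
Proof.
move=> n2.
set l := trunc_log 2 n.
have l2 : 0 < ln (2 : R) by apply: ln_gt0; lra.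
have hl : (2 ^ l <= n)%N by apply: trunc_logP => //; lia.
have h1 : ln (2 : R) *+ l <= ln (n%:R : R).
  rewrite -lnXn; last lra.
  rewrite ler_ln ?posrE ?exprn_gt0 ?ltr0n //; last lia.
  by rewrite -natrX ler_nat.
have h2 : ln (2 : R) <= ln (n%:R : R).
  by rewrite ler_ln ?posrE ?ltr0n // ?ler_nat //; lia.
have h3 : (1 * 4 * (fsz n).*2 = 32 * l + 64)%N by rewrite /fsz -/l -muln2; lia.
rewrite -[ln 2 *+ l]mulr_natl in h1.
rewrite h3 expr1 natrD natrM.
rewrite mulrAC ler_pdivlMr //.
have : 0 <= l%:R * ln (2 : R) by apply: mulr_ge0; [exact: ler0n | lra].
nra.
Qed.

Lemma part2 : forall R : realType, exists (c : R) (k N : nat), forall n : nat, (N <= n)%N ->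
     exists (H d p : nat) (layers : seq (soft_layer R d H))
            (emb : nat -> 'I_n -> 'rV[R]_d) (out : 'rV[R]_d -> 'I_n),
       [/\ size layers = 1%N,
           all_soft_pbit p layers,
           (H * d * p)%N%:R <= c * (ln (n%:R : R)) ^+ k
         & soft_solves p layers emb out].
Proof.
move=> R; exists (128 / ln 2), 1%N, 2%N => n n2.
case: n n2 => [|m] // n2.
have hB := hB_ok (ltn0Sn m).
exists 1%N, 4%N, (fsz m.+1).*2, [:: the_layer R], (@emb R m (fsz m.+1)), (@the_out R m).
split => //.
- exact: (the_pbit R hB).
- exact: size_bound.
- exact: (the_solves R hB).
Qed.

Unset Implicit Arguments.

Theorem theoremA6 :
  (* (1) lower bound for L-layer linear attention *)
  (forall (R : realType) (n L H d p : nat),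
     ((L * H * d * (d + 1) * p)%N%:R < log2fact R n) ->
     forall (layers : seq (lin_layer R d H)) (emb : nat -> 'I_n -> 'rV[R]_d)
            (out : 'rV[R]_d -> 'I_n),
       size layers = L ->
       all_lin_pbit p layers ->
       ~ lin_solves p layers emb out)
  /\
  (* (2) a one-layer full attention Transformer solves PerCom with
         H d p = O(poly log n) *)
  (forall R : realType, exists (c : R) (k N : nat), forall n : nat, (N <= n)%N ->
     exists (H d p : nat) (layers : seq (soft_layer R d H))
            (emb : nat -> 'I_n -> 'rV[R]_d) (out : 'rV[R]_d -> 'I_n),
       [/\ size layers = 1%N,
           all_soft_pbit p layers,
           (H * d * p)%N%:R <= c * (ln (n%:R : R)) ^+ k
         & soft_solves p layers emb out])
  /\
  (* (3) the same lower bound for linear attention with chain of thought,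
         for any number T of generated tokens and any way of reading the
         answer from the generated tokens *)
  (forall (R : realType) (n L H d p T : nat) (Voc : finType),
     ((L * H * d * (d + 1) * p)%N%:R < log2fact R n) ->
     forall (layers : seq (lin_layer R d H)) (inp : 'I_n -> Voc)
            (emb : nat -> Voc -> 'rV[R]_d) (next : 'rV[R]_d -> Voc)
            (ans : seq Voc -> 'I_n -> 'I_n),
       size layers = L ->
       all_lin_pbit p layers ->
       ~ (forall (s t : {perm 'I_n}) (i : 'I_n),
            ans (lin_cot p layers emb next (map inp (percom_input s t)) T) i
            = s (t i))).
Proof.
split; first exact: part1.
split; first exact: part2.
exact: part3.
Qed.
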